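(* Let $d\ge 7$ and let $G$ be a $d$-regular graph with girth $g(G)=5$. If there exists a vertex of $G$ that lies on no cycle of length $6$ in $G$, then $\chi_b(G)=d+1$.
   Context: The girth $g(G)$ is the length of a shortest cycle of $G$. A proper $k$-coloring $c:V(G)\to\{1,\dots,k\}$ is a b-coloring if every color class contains a vertex $v$ whose closed neighborhood $N[v]$ contains all $k$ colors. The b-chromatic number $\chi_b(G)$ is the largest $k$ such that $G$ admits a b-coloring with $k$ colors. *)

(* Defs.v *)
From mathcomp Require Import all_boot all_order.
Set Implicit Arguments. Unset Strict Implicit. Unset Printing Implicit Defensive.

Definition simple_graph (T : finType) (e : rel T) : Prop :=
  symmetric e /\ irreflexive e.

Definition regular (T : finType) (e : rel T) (d : nat) : Prop :=
  forall x : T, #|[set y | e x y]| = d.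

Definition is_cycle (T : finType) (e : rel T) (s : seq T) : bool :=
  [&& 3 <= size s, uniq s & cycle e s].

Definition has_cycle_of_length (T : finType) (e : rel T) (k : nat) : Prop :=
  exists s : seq T, is_cycle e s /\ size s = k.

Definition girth_eq (T : finType) (e : rel T) (g : nat) : Prop :=
  has_cycle_of_length e g /\
  forall k, has_cycle_of_length e k -> g <= k.

Definition closed_nbhd (T : finType) (e : rel T) (v : T) : {set T} :=
  [set u | (u == v) || e v u].

Definition proper_coloring (T : finType) (e : rel T) (k : nat)
  (c : {ffun T -> 'I_k}) : bool :=
  [forall x, forall y, e x y ==> (c x != c y)].

Definition b_coloring (T : finType) (e : rel T) (k : nat)
  (c : {ffun T -> 'I_k}) : bool :=
  proper_coloring e c &&
  [forall i : 'I_k, exists v, (c v == i) &&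
      [forall j : 'I_k, exists u, (u \in closed_nbhd e v) && (c u == j)]].

Definition has_b_coloring (T : finType) (e : rel T) (k : nat) : bool :=
  [exists c : {ffun T -> 'I_k}, b_coloring e c].

(* b-chromatic number: largest k admitting a b-coloring.  Any b-coloring with
   k colours has k nonempty colour classes, so k <= #|T|; hence the maximum
   may be taken over k < #|T|.+1. *)
Definition b_chromatic (T : finType) (e : rel T) : nat :=
  \max_(k < #|T|.+1 | has_b_coloring e k) k.

(* Main.v *)
Require Import Defs.
From mathcomp Require Import all_boot all_order all_fingroup zify.
Set Implicit Arguments. Unset Strict Implicit. Unset Printing Implicit Defensive.

Lemma e_neq (T : finType) (e : rel T) : irreflexive e -> forall x y, e x y -> x != y.
Proof. by move=> irr x y; apply: contraTneq => ->; rewrite irr. Qed.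

Ltac neqs := repeat match goal with H : is_true (?x != ?y) |- _ => try rewrite (negbTE H); try rewrite [y == x]eq_sym (negbTE H); clear H end; done.

Lemma no_tri (T : finType) (e : rel T) : irreflexive e -> girth_eq e 5 ->
  forall a b c, e a b -> e b c -> e c a -> False.
Proof.
move=> irr [_ G] a b c ab bc ca.
suff H: has_cycle_of_length e 3 by move: (G 3 H).
exists [:: a; b; c]; split=> //.
have ? := e_neq irr ab; have ? := e_neq irr bc; have ? := e_neq irr ca.
rewrite /is_cycle /= ab bc ca !inE !negb_or /=; neqs.
Qed.

Lemma no_sq (T : finType) (e : rel T) : irreflexive e -> girth_eq e 5 ->
  forall a b c f, e a b -> e b c -> e c f -> e f a -> a != c -> b != f -> False.
Proof.
move=> irr [_ G] a b c f ab bc cf fa ac bf.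
suff H: has_cycle_of_length e 4 by move: (G 4 H).
exists [:: a; b; c; f]; split=> //.
have ? := e_neq irr ab; have ? := e_neq irr bc; have ? := e_neq irr cf; have ? := e_neq irr fa.
rewrite /is_cycle /= ab bc cf fa !inE !negb_or /=; neqs.
Qed.

Definition nbs (T : finType) (e : rel T) (x : T) : {set T} := [set y | e x y].
Definition Wset (T : finType) (e : rel T) (v : T) : {set T} :=
  [set x | [&& x != v, ~~ e v x & [exists u, e v u && e u x]]].
Definition parent (T : finType) (e : rel T) (v x : T) : option T := [pick u | e v u && e u x].

Lemma cnbhdE (T : finType) (e : rel T) x : closed_nbhd e x = x |: nbs e x.
Proof. by apply/setP => y; rewrite !inE. Qed.

Lemma card_cnbhd (T : finType) (e : rel T) d : irreflexive e -> regular e d ->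
  forall x, #|closed_nbhd e x| = d.+1.
Proof.
move=> irr reg x; rewrite cnbhdE cardsU1 /nbs reg inE irr.
by [].
Qed.

Lemma parent_uniq (T : finType) (e : rel T) : symmetric e -> irreflexive e -> girth_eq e 5 ->
  forall v u u' x, e v u -> e u x -> e v u' -> e u' x -> x != v -> u = u'.
Proof.
move=> sym irr G v u u' x vu ux vu' u'x xv.
apply/eqP; apply/negPn/negP => uu'.
apply: (no_sq irr G vu ux _ _ _ uu') => //; first by rewrite sym.
by rewrite sym.
by rewrite eq_sym.
Qed.

Lemma parentP (T : finType) (e : rel T) : symmetric e -> irreflexive e -> girth_eq e 5 ->
  forall v x u, e v u -> e u x -> x != v -> parent e v x = Some u.
Proof.
move=> sym irr G v x u vu ux xv; rewrite /parent.
case: pickP => [u' /andP[vu' u'x]|/(_ u)]; last by rewrite vu ux.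
by rewrite (parent_uniq sym irr G vu' u'x vu ux xv).
Qed.

Lemma nbW (T : finType) (e : rel T) : symmetric e -> irreflexive e -> girth_eq e 5 ->
  forall v u w, e v u -> e u w -> w != v -> w \in Wset e v.
Proof.
move=> sym irr G v u w vu uw wv; rewrite inE wv /=.
apply/andP; split; last by apply/existsP; exists u; rewrite vu uw.
apply/negP => vw; apply: (no_tri irr G vu uw); by rewrite sym.
Qed.

Lemma WsetP (T : finType) (e : rel T) v x : x \in Wset e v ->
  [/\ x != v, ~~ e v x & exists2 u, e v u & e u x].
Proof.
rewrite inE => /and3P[xv nvx /existsP[u /andP[vu ux]]]; split=> //; by exists u.
Qed.

Lemma matching (T : finType) (e : rel T) : symmetric e -> irreflexive e -> girth_eq e 5 ->
  forall v, (forall s : seq T, is_cycle e s -> size s = 6 -> v \notin s) ->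
  forall x y y', x \in Wset e v -> y \in Wset e v -> y' \in Wset e v -> e x y -> e x y' -> y = y'.
Proof.
move=> sym irr G v hv x y y' xW yW y'W xy xy'.
apply/eqP; apply/negPn/negP => yy'.
have [xv nvx [u vu ux]] := WsetP xW.
have [yv nvy [u1 vu1 u1y]] := WsetP yW.
have [y'v nvy' [u2 vu2 u2y']] := WsetP y'W.
have u12 : u1 != u2.
  apply/negP => /eqP E; subst u2.
  apply: (no_sq irr G u1y _ xy' _ _ yy'); first by rewrite sym.
  by rewrite sym.
  by apply/negP => /eqP E; subst x; rewrite vu1 in nvx.
have := hv [:: v; u1; y; x; y'; u2].
rewrite inE eqxx /= => H; suff: false by [].
apply: H => //.
rewrite /is_cycle /= vu1 u1y (sym y x) xy xy' (sym y' u2) u2y' (sym u2 v) vu2 /=.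
have ? := e_neq irr vu1; have ? := e_neq irr vu2; have ? := e_neq irr xy; have ? := e_neq irr xy'.
have ? : u1 != y by apply: contraNneq nvy => <-.
have ? : u1 != x by apply: contraNneq nvx => <-.
have ? : u1 != y' by apply: contraNneq nvy' => <-.
have ? : u2 != y by apply: contraNneq nvy => <-.
have ? : u2 != x by apply: contraNneq nvx => <-.
have ? : u2 != y' by apply: contraNneq nvy' => <-.
rewrite !inE !negb_or; neqs.
Qed.

Definition injf (T : finType) n (A : {set T}) (C : {set 'I_n.+1}) (x : T) : 'I_n.+1 :=
  nth ord0 (enum C) (index x (enum A)).

Lemma injf_in (T : finType) n (A : {set T}) (C : {set 'I_n.+1}) x :
  #|A| <= #|C| -> x \in A -> injf A C x \in C.
Proof.
move=> le xA; rewrite /injf -mem_enum mem_nth //.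
rewrite -cardE; apply: leq_trans le; rewrite cardE index_mem mem_enum //.
Qed.

Lemma injf_inj (T : finType) n (A : {set T}) (C : {set 'I_n.+1}) :
  #|A| <= #|C| -> {in A &, injective (injf A C)}.
Proof.
move=> le x y xA yA; rewrite /injf => /eqP.
have hx : index x (enum A) < size (enum C).
  rewrite -cardE; apply: leq_trans le; rewrite cardE index_mem mem_enum //.
have hy : index y (enum A) < size (enum C).
  rewrite -cardE; apply: leq_trans le; rewrite cardE index_mem mem_enum //.
rewrite nth_uniq ?enum_uniq // => /eqP E.
have xA' : x \in enum A by rewrite mem_enum.
have yA' : y \in enum A by rewrite mem_enum.
by rewrite -(nth_index x xA') E nth_index.
Qed.

Lemma inj_U1 (T : finType) (R : eqType) (f : T -> R) (A : {set T}) a :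
  {in A &, injective f} -> (forall y, y \in A -> f y != f a) -> {in a |: A &, injective f}.
Proof.
move=> inj ne x y; rewrite !inE => /predU1P[->|xA] /predU1P[->|yA] //.
- by move=> E; have := ne y yA; rewrite E eqxx.
- by move=> E; have := ne x xA; rewrite E eqxx.
- exact: inj.
Qed.


Definition pal1 d : {set 'I_d.+1} := ~: [set ord0].
Definition colU (T : finType) (e : rel T) v d (u : T) : 'I_d.+1 := injf (nbs e v) (pal1 d) u.
Definition col0 (T : finType) (e : rel T) v d (x : T) : 'I_d.+1 :=
  if x == v then ord0 else if e v x then colU e v d x
  else if parent e v x is Some u then injf (nbs e u :\ v) (~: [set ord0; colU e v d u]) x
  else ord0.
Definition Inv (T : finType) (e : rel T) v d (col : T -> 'I_d.+1) :=
  forall x, x \in closed_nbhd e v -> {in closed_nbhd e x &, injective col}.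

Lemma card_pal1 d : #|pal1 d| = d.
Proof. by rewrite /pal1 cardsC1 card_ord. Qed.

Lemma card_pal2 d (c : 'I_d.+1) : c != ord0 -> #|~: [set ord0; c]| = d.-1.
Proof.
move=> c0; have := cardsC [set (ord0 : 'I_d.+1); c]; rewrite cards2 card_ord eq_sym c0 /= => H.
move: H; rewrite add2n => -[E]; rewrite -[in RHS]E //.
Qed.

Lemma Inv_col0 (T : finType) (e : rel T) d v : symmetric e -> irreflexive e -> girth_eq e 5 ->
  regular e d -> Inv e v (col0 e v d).
Proof.
move=> sym irr G reg x.
have cv : #|nbs e v| = d by rewrite /nbs reg.
have inj1 : {in nbs e v &, injective (colU e v d)}.
  by apply: injf_inj; rewrite cv card_pal1.
have in1 : forall u, u \in nbs e v -> colU e v d u \in pal1 d.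
  by move=> u uv; apply: injf_in => //; rewrite cv card_pal1.
have c0v : col0 e v d v = ord0 by rewrite /col0 eqxx.
have c0u : forall u, e v u -> col0 e v d u = colU e v d u.
  by move=> u vu; rewrite /col0 vu eq_sym (negbTE (e_neq irr vu)).
rewrite inE => /predU1P[->|vx].
  rewrite cnbhdE; apply: inj_U1.
    move=> y z; rewrite !inE => vy vz; rewrite !c0u //.
    by apply: inj1; rewrite inE.
  move=> y; rewrite inE => vy; rewrite c0v c0u //.
  have : y \in nbs e v by rewrite inE.
  by move/in1; rewrite /pal1 !inE eq_sym.
have xv : x \in nbs e v by rewrite inE.
have cu0 : colU e v d x != ord0 by have := in1 x xv; rewrite /pal1 !inE.
have cw : forall w, w \in nbs e x :\ v ->
    col0 e v d w = injf (nbs e x :\ v) (~: [set ord0; colU e v d x]) w.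
  move=> w; rewrite !inE => /andP[wv xw].
  rewrite /col0 (negbTE wv).
  have -> : e v w = false.
    apply/negP => vw; apply: (no_tri irr G vx xw); by rewrite sym.
  by rewrite (parentP sym irr G vx xw wv).
have cx : #|nbs e x :\ v| <= #|~: [set ord0; colU e v d x]|.
  have := cardsD1 v (nbs e x); rewrite card_pal2 // /nbs reg inE -(sym v x) vx; lia.
have nbx : nbs e x = v |: (nbs e x :\ v) by rewrite setD1K // inE -sym.
rewrite cnbhdE nbx; apply: inj_U1; first apply: inj_U1.
- move=> y z yN zN; rewrite !cw //; exact: injf_inj.
- move=> y yN; rewrite cw // c0v.
  by have := injf_in cx yN; rewrite !inE negb_or => /andP[].
- move=> y; rewrite in_setU1 => /predU1P[->|yN]; first by rewrite c0v c0u // eq_sym.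
  rewrite cw // c0u //.
  by have := injf_in cx yN; rewrite !inE negb_or => /andP[].
Qed.

Definition conf (T : finType) (e : rel T) v d (col : T -> 'I_d.+1) : {set T} :=
  [set x in Wset e v | [exists y in Wset e v, e x y && (col x == col y)]].

Definition swapc (T : finType) (R : Type) (f : T -> R) a a' x :=
  if x == a then f a' else if x == a' then f a else f x.

Lemma inj_swap (T : finType) (R : eqType) (f : T -> R) (A : {set T}) a a' :
  {in A &, injective f} -> (a \in A) = (a' \in A) -> {in A &, injective (swapc f a a')}.
Proof.
move=> inj E x y xA yA.
case: (boolP (a \in A)) => aA.
  have a'A : a' \in A by rewrite -E.
  have sw : forall z, swapc f a a' z = f (tperm a a' z).
    move=> z; rewrite /swapc; case: (eqVneq z a) => [->|za]; first by rewrite tpermL.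
    case: (eqVneq z a') => [->|za']; first by rewrite tpermR.
    by rewrite tpermD // eq_sym.
  have tA : forall z, z \in A -> tperm a a' z \in A.
    by move=> z zA; case: (tpermP a a' z).
  rewrite !sw => /inj; move/(_ (tA x xA) (tA y yA)); exact: perm_inj.
rewrite /swapc.
have a'A : a' \notin A by rewrite -E.
have xa : x != a by apply: contraNneq aA => <-.
have ya : y != a by apply: contraNneq aA => <-.
have xa' : x != a' by apply: contraNneq a'A => <-.
have ya' : y != a' by apply: contraNneq a'A => <-.
rewrite (negbTE xa) (negbTE ya) (negbTE xa') (negbTE ya'); exact: inj.
Qed.

Lemma inj_surj (T : finType) n (f : T -> 'I_n) (A : {set T}) :
  {in A &, injective f} -> #|A| = n -> forall j, exists2 x, x \in A & f x = j.
Proof.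
move=> inj cA j.
have E : f @: A = setT.
  apply/eqP; rewrite eqEcard subsetT cardsT card_ord card_in_imset // cA leqnn //.
have : j \in f @: A by rewrite E inE.
by case/imsetP => x xA ->; exists x.
Qed.

Lemma only_parent (T : finType) (e : rel T) v : symmetric e -> irreflexive e -> girth_eq e 5 ->
  forall u w x, e v u -> e u w -> w \in Wset e v -> x \in closed_nbhd e v ->
  w \in closed_nbhd e x -> x = u.
Proof.
move=> sym irr G u w x vu uw wW; have [wv nvw _] := WsetP wW.
rewrite !inE => /predU1P[->|vx] /predU1P[E|xw].
- by rewrite E eqxx in wv.
- by rewrite xw in nvw.
- by subst w; rewrite vx in nvw.
- exact: (parent_uniq sym irr G vx xw vu uw wv).
Qed.

Lemma swap_step (T : finType) (e : rel T) d v : symmetric e -> irreflexive e -> girth_eq e 5 ->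
  regular e d -> (forall s : seq T, is_cycle e s -> size s = 6 -> v \notin s) ->
  forall col : T -> 'I_d.+1, Inv e v col -> forall a, a \in conf e v col ->
  exists col' : T -> 'I_d.+1, Inv e v col' /\ #|conf e v col'| < #|conf e v col|.
Proof.
move=> sym irr G reg hv col inv a aC.
move: (aC); rewrite inE => /andP[aW /existsP[b /andP[bW /andP[ab /eqP cab]]]].
have [av nva [u vu ua]] := WsetP aW.
set c := col a.
have vN : v \in closed_nbhd e v by rewrite !inE eqxx.
have uN : u \in closed_nbhd e v by rewrite !inE vu orbT.
have injv := inv v vN.
have injU := inv u uN.
have cardN := card_cnbhd irr reg.
have [uc ucN colc] := inj_surj injv (cardN v) c.
have aNu : a \in closed_nbhd e u by rewrite !inE ua orbT.
have vNu : v \in closed_nbhd e u by rewrite !inE -sym vu orbT.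
have uNu : u \in closed_nbhd e u by rewrite !inE eqxx.
have cva : col v != c.
  by apply/eqP => /(injU v a vNu aNu) E; rewrite E eqxx in av.
have cua : col u != c.
  by apply/eqP => /(injU u a uNu aNu) E; subst u; rewrite irr in ua.
have vuc : e v uc.
  move: ucN; rewrite !inE => /predU1P[E|//]; subst uc; by rewrite colc eqxx in cva.
have ucu : uc != u by apply: contraNneq cua => <-; rewrite colc.
pose P a'' y := (y \in Wset e v) && e a'' y && (col y == c).
pose B := [set a'' in nbs e u :\ v | [exists y, P a'' y]].
pose h a'' := odflt v (parent e v (odflt v [pick y | P a'' y])).
have hB : forall a'', a'' \in B -> exists y p,
    [/\ y \in Wset e v, e a'' y, col y = c, e v p & e p y /\ h a'' = p].
  move=> a''; rewrite inE => /andP[_ /existsP[y0 Py0]].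
  rewrite /h; case: pickP => [y /andP[/andP[yW a''y] /eqP cy]|/(_ y0)]; last by rewrite Py0.
  have [yv _ [p vp py]] := WsetP yW.
  by exists y, p; rewrite (parentP sym irr G vp py yv).
have hsub : h @: B \subset nbs e v :\ u :\ uc.
  apply/subsetP => p' /imsetP[a'' a''B ->].
  have [y [p [yW a''y cy vp [py ->]]]] := hB a'' a''B.
  have [_ nvy _] := WsetP yW.
  move: (a''B); rewrite !inE => /andP[/andP[_ ua''] _].
  rewrite vp andbT; apply/andP; split.
    apply/eqP => E; subst p.
    have ucNuc : uc \in closed_nbhd e uc by rewrite !inE eqxx.
    have yNuc : y \in closed_nbhd e uc by rewrite !inE py orbT.
    have := inv uc ucN y uc yNuc ucNuc; rewrite cy colc => /(_ erefl) E; subst y.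
    by rewrite vp in nvy.
  apply/eqP => E; subst p.
  apply: (@no_tri _ _ irr G u y a'' py); by rewrite sym.
have hinj : {in B &, injective h}.
  move=> a1 a2 a1B a2B.
  have [y1 [p [y1W a1y1 cy1 vp1 [py1 ->]]]] := hB a1 a1B.
  have [y2 [p2 [y2W a2y2 cy2 vp2 [py2 ->]]]] := hB a2 a2B => E; subst p2.
  have pN : p \in closed_nbhd e v by rewrite !inE vp1 orbT.
  have y1N : y1 \in closed_nbhd e p by rewrite !inE py1 orbT.
  have y2N : y2 \in closed_nbhd e p by rewrite !inE py2 orbT.
  have := inv p pN y1 y2 y1N y2N; rewrite cy1 cy2 => /(_ erefl) E; subst y2.
  apply/eqP; apply/negPn/negP => a12.
  move: a1B a2B; rewrite !inE => /andP[/andP[_ ua1] _] /andP[/andP[_ ua2] _].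
  have [_ nvy _] := WsetP y1W.
  apply: (no_sq irr G ua1 a1y1 _ _ _ a12); first by rewrite sym.
    by rewrite sym.
  by apply: contraNneq nvy => <-.
have cB : #|B| <= d - 2.
  rewrite -(card_in_imset hinj); apply: leq_trans (subset_leq_card hsub) _.
  have := cardsD1 u (nbs e v); have := cardsD1 uc (nbs e v :\ u).
  have h1 : u \in nbs e v by rewrite inE.
  have h2 : uc \in nbs e v :\ u by rewrite !inE ucu vuc.
  have h3 : #|nbs e v| = d by rewrite /nbs reg.
  rewrite h1 h2 h3.
  move: (#|nbs e v :\ u|) (#|nbs e v :\ u :\ uc|) => x y; clear; lia.
have d2 : 2 <= d.
  have := cardsD1 u (nbs e v); have := cardsD1 uc (nbs e v :\ u).
  have h1 : u \in nbs e v by rewrite inE.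
  have h2 : uc \in nbs e v :\ u by rewrite !inE ucu vuc.
  have h3 : #|nbs e v| = d by rewrite /nbs reg.
  rewrite h1 h2 h3.
  move: (#|nbs e v :\ u|) (#|nbs e v :\ u :\ uc|) => x y; clear; lia.
have cNu : #|nbs e u :\ v| = d - 1.
  have := cardsD1 v (nbs e u).
  have h1 : v \in nbs e u by rewrite inE -sym.
  have h3 : #|nbs e u| = d by rewrite /nbs reg.
  rewrite h1 h3; move: (#|nbs e u :\ v|) => x; clear; lia.
have : ~~ (nbs e u :\ v \subset B).
  apply/negP => /subset_leq_card; rewrite cNu.
  move: cB d2; move: (#|B|) => x; clear; lia.
case/subsetPn => a' a'N a'B.
move: (a'N); rewrite !inE => /andP[a'v ua'].
have a'W : a' \in Wset e v by apply: (nbW sym irr G vu ua' a'v).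
have aB : a \in B.
  rewrite !inE av ua /=; apply/existsP; exists b; rewrite /P bW ab -cab eqxx.
  by [].
have a'a : a' != a by apply: contraNneq a'B => ->.
have nea : ~~ e a a'.
  apply/negP => aa'; apply: (no_tri irr G ua aa'); by rewrite sym.
have a'Nu : a' \in closed_nbhd e u by rewrite !inE ua' orbT.
have ca' : col a' != c by apply/eqP => /(injU a' a a'Nu aNu) E; rewrite E eqxx in a'a.
have ba : b != a by rewrite eq_sym (e_neq irr ab).
have ba' : b != a' by apply: contraNneq nea => <-.
exists (swapc col a a'); split.
  move=> x xN; apply: inj_swap (inv x xN) _.
  case: (eqVneq x u) => [->|xu]; first by rewrite aNu a'Nu.
  have na : a \notin closed_nbhd e x.
    by apply/negP => /(only_parent sym irr G vu ua aW xN) E; rewrite E eqxx in xu.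
  have na' : a' \notin closed_nbhd e x.
    by apply/negP => /(only_parent sym irr G vu ua' a'W xN) E; rewrite E eqxx in xu.
  by rewrite (negbTE na) (negbTE na').
have sub : conf e v (swapc col a a') \subset conf e v col :\ a.
  apply/subsetP => x; rewrite inE => /andP[xW /existsP[y /andP[yW /andP[xy /eqP E]]]].
  rewrite /swapc in E.
  case: (eqVneq x a) => [xa|xa].
    subst x; have yb := matching sym irr G hv aW yW bW xy ab; subst y.
    by move: E; rewrite eqxx (negbTE ba) (negbTE ba') -cab => /eqP; rewrite (negbTE ca').
  case: (eqVneq x a') => [xa'|xa'].
    subst x.
    have ya : y != a by apply: contraNneq nea => <-; rewrite sym.
    have ya' : y != a' by rewrite eq_sym (e_neq irr xy).
    move: E; rewrite eqxx (negbTE a'a) (negbTE ya) (negbTE ya') => E.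
    case/negP: a'B; rewrite inE a'N; apply/existsP; exists y.
    by rewrite /P yW xy -E eqxx.
  move: E; rewrite (negbTE xa) (negbTE xa').
  case: (eqVneq y a) => [ya|ya].
    subst y; have ax : e a x by rewrite sym.
    have xb := matching sym irr G hv aW xW bW ax ab; subst x.
    by move/eqP; rewrite -cab eq_sym (negbTE ca').
  case: (eqVneq y a') => [ya'|ya'].
    subst y => E.
    case/negP: a'B; rewrite inE a'N; apply/existsP; exists x.
    by rewrite /P xW sym xy E eqxx.
  move=> E; rewrite in_setD1 xa in_set xW /=; apply/existsP; exists y.
  by rewrite yW xy E eqxx.
apply: leq_ltn_trans (subset_leq_card sub) _.
have := cardsD1 a (conf e v col); rewrite aC; move: (#|conf e v col|) (#|conf e v col :\ a|) => x y; clear; lia.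
Qed.

Lemma good_col (T : finType) (e : rel T) d v : symmetric e -> irreflexive e -> girth_eq e 5 ->
  regular e d -> (forall s : seq T, is_cycle e s -> size s = 6 -> v \notin s) ->
  exists col : T -> 'I_d.+1, Inv e v col /\ conf e v col = set0.
Proof.
move=> sym irr G reg hv.
have: forall n (col : T -> 'I_d.+1), #|conf e v col| <= n -> Inv e v col ->
    exists col' : T -> 'I_d.+1, Inv e v col' /\ conf e v col' = set0.
  move=> n; elim: n => [|n IH] col hc inv.
    by exists col; split=> //; apply/eqP; rewrite -cards_eq0 -leqn0.
  case: (set_0Vmem (conf e v col)) => [E|[a aC]]; first by exists col.
  have [col' [inv' lt]] := swap_step sym irr G reg hv inv aC.
  apply: (IH col') => //; by rewrite -ltnS; apply: leq_trans lt hc.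
move/(_ _ (col0 e v d) (leqnn _)); apply; exact: Inv_col0.
Qed.

Lemma greedy (T : finType) (e : rel T) d : symmetric e -> irreflexive e ->
  (forall x, #|nbs e x| <= d) ->
  forall n (S : {set T}) (p : T -> 'I_d.+1), #|~: S| <= n ->
  (forall x y, x \in S -> y \in S -> e x y -> p x != p y) ->
  exists c : {ffun T -> 'I_d.+1}, proper_coloring e c /\ {in S, forall x, c x = p x}.
Proof.
move=> sym irr deg; elim=> [|n IH] S p hS pr.
  have ST : forall x, x \in S.
    move=> x; apply/negPn/negP => xS.
    have : x \in ~: S by rewrite inE.
    by move: hS; rewrite leqn0 cards_eq0 => /eqP ->; rewrite inE.
  exists (finfun p); split; last by move=> x _; rewrite ffunE.
  apply/forallP => x; apply/forallP => y; apply/implyP => xy; rewrite !ffunE; exact: pr.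
case: (set_0Vmem (~: S)) => [E|[x]].
  by apply: (IH S p) => //; rewrite E cards0.
rewrite inE => xS.
have : ~~ ([set: 'I_d.+1] \subset p @: (nbs e x :&: S)).
  apply/negP => /subset_leq_card; rewrite cardsT card_ord.
  have := leq_imset_card p (nbs e x :&: S).
  have := subset_leq_card (subsetIl (nbs e x) S).
  have := deg x.
  move: (#|nbs e x|) (#|nbs e x :&: S|) (#|p @: (nbs e x :&: S)|) => a b c; clear; lia.
case/subsetPn => k _ kN.
pose p' y := if y == x then k else p y.
have hcard : #|~: (x |: S)| <= n.
  have E : ~: (x |: S) = (~: S) :\ x by apply/setP => y; rewrite !inE negb_or.
  rewrite E; have := cardsD1 x (~: S); rewrite inE xS.
  move: hS; move: (#|~: S|) (#|~: S :\ x|) => a b; clear; lia.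
have hpr : forall y z, y \in x |: S -> z \in x |: S -> e y z -> p' y != p' z.
  have kz : forall z, z \in S -> e x z -> k != p z.
    move=> z zS xz; apply: contraNneq kN => ->; apply/imsetP; exists z => //.
    by rewrite !inE xz.
  have zx : forall z, z \in S -> (z == x) = false.
    by move=> z zS; apply/negP => /eqP E; subst z; rewrite zS in xS.
  move=> y z; rewrite !in_setU1 /p' => /predU1P[->|yS] /predU1P[->|zS] yz.
  - by rewrite irr in yz.
  - by rewrite eqxx zx //; apply: kz.
  - by rewrite eqxx zx // eq_sym; apply: kz; rewrite // sym.
  - by rewrite !zx //; apply: pr.
have [c [pc cS]] := IH (x |: S) p' hcard hpr.
exists c; split=> // y yS; rewrite cS; last by rewrite in_setU1 yS orbT.
rewrite /p'; case: (eqVneq y x) => // E; subst y; by rewrite yS in xS.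
Qed.

Lemma inj_eq_in (T : finType) (R : eqType) (f g : T -> R) (A : {set T}) :
  {in A &, injective f} -> {in A, f =1 g} -> {in A &, injective g}.
Proof. by move=> inj E x y xA yA; rewrite -!E //; apply: inj. Qed.

Lemma b_col_exists (T : finType) (e : rel T) d v : symmetric e -> irreflexive e -> girth_eq e 5 ->
  regular e d -> (forall s : seq T, is_cycle e s -> size s = 6 -> v \notin s) ->
  has_b_coloring e d.+1.
Proof.
move=> sym irr G reg hv.
have [col [inv c0]] := good_col sym irr G reg hv.
pose S := [set x | (x \in closed_nbhd e v) || (x \in Wset e v)].
have prS : forall x y, x \in S -> y \in S -> e x y -> col x != col y.
  have one : forall x y, x \in closed_nbhd e v -> e x y -> col x != col y.
    move=> x y xN xy; apply/eqP => /(inv x xN x y) E.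
    have : x = y by apply: E; rewrite !inE ?eqxx ?xy ?orbT.
    by move=> E'; subst y; rewrite irr in xy.
  move=> x y; rewrite [x \in S]in_set [y \in S]in_set => /orP[xN|xW] /orP[yN|yW] xy.
  - exact: one xN xy.
  - exact: one xN xy.
  - by rewrite eq_sym; apply: one yN _; rewrite sym.
  - apply/negP => /eqP E.
    have : x \in conf e v col.
      by rewrite inE xW; apply/existsP; exists y; rewrite yW xy E eqxx.
    by rewrite c0 inE.
have deg : forall x, #|nbs e x| <= d by move=> x; rewrite /nbs reg.
have [c [pc cS]] := greedy sym irr deg (leqnn _) prS.
have NS : forall w, w \in closed_nbhd e v -> closed_nbhd e w \subset S.
  move=> w wN; apply/subsetP => z; rewrite [z \in closed_nbhd e w]inE [z \in S]in_set => /predU1P[->|wz]; first by rewrite wN.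
  move: wN; rewrite [w \in closed_nbhd e v]inE => /predU1P[E|vw].
    by subst w; rewrite [z \in closed_nbhd e v]inE wz orbT.
  case: (eqVneq z v) => [->|zv]; first by rewrite [v \in closed_nbhd e v]inE eqxx.
  by rewrite (nbW sym irr G vw wz zv) orbT.
have injc : forall w, w \in closed_nbhd e v -> {in closed_nbhd e w &, injective c}.
  move=> w wN; apply: (inj_eq_in (inv w wN)) => z zN.
  by rewrite cS //; apply: (subsetP (NS w wN)).
have cardN := card_cnbhd irr reg.
have vN : v \in closed_nbhd e v by rewrite !inE eqxx.
apply/existsP; exists c; rewrite /b_coloring pc /=.
apply/forallP => i.
have [w wN cw] := inj_surj (injc v vN) (cardN v) i.
apply/existsP; exists w; rewrite cw eqxx /=.
apply/forallP => j.
have [u uN cu] := inj_surj (injc w wN) (cardN w) j.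
by apply/existsP; exists u; rewrite uN cu eqxx.
Qed.

Lemma ub_b (T : finType) (e : rel T) d k : irreflexive e -> regular e d ->
  has_b_coloring e k -> k <= d.+1.
Proof.
move=> irr reg /existsP[c /andP[_ /forallP H]].
case: k c H => [//|k] c H.
have /existsP[w /andP[_ /forallP Hw]] := H ord0.
have sub : [set: 'I_k.+1] \subset c @: closed_nbhd e w.
  apply/subsetP => j _; have /existsP[u /andP[uN /eqP <-]] := Hw j.
  by apply/imsetP; exists u.
have := subset_leq_card sub; rewrite cardsT card_ord => le; apply: leq_trans le _.
rewrite -(card_cnbhd irr reg w); exact: leq_imset_card.
Qed.

Theorem mainTheorem3 (T : finType) (e : rel T) (d : nat) :
  simple_graph e -> 7 <= d -> regular e d -> girth_eq e 5 ->
  (exists v : T, forall s : seq T, is_cycle e s -> size s = 6 -> v \notin s) ->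
  b_chromatic e = d.+1.
Proof.
move=> [sym irr] _ reg G [v hv].
apply/eqP; rewrite eqn_leq; apply/andP; split.
  apply/bigmax_leqP => k hk; exact: ub_b irr reg hk.
have lt : d.+1 < #|T|.+1 by rewrite ltnS -(card_cnbhd irr reg v) max_card.
exact: (@leq_bigmax_cond _ (fun k : 'I_#|T|.+1 => has_b_coloring e k) (fun k => nat_of_ord k) (Ordinal lt) (b_col_exists sym irr G reg hv)).
Qed.
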